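(* Let $p\in[1,\infty)$, $w$ a weight sequence, and let $A\subset L_{p,w}$ be bounded in $\|\cdot\|_{p,w}$ and equinormed with respect to $\{\|\cdot\|_{p,w,i}\}_{i\in\mathbb{N}}$. Then $$\forall\varepsilon>0\ \exists N\in\mathbb{N}\ \forall a\in A\ \forall i\ge N:\ \sum_{j=i+1}^\infty|a_{\sigma^a_j}|^p w_j<\varepsilon.$$
   Context: A weight sequence is a sequence $w=(w_i)$ of positive reals with $w_1=1\ge w_2\ge\dots$, $w_i\to0$, and $\sum_i w_i=+\infty$. For a real sequence $a$, $\|a\|_{p,w}=\sup_{\sigma}\big(\sum_{i=1}^\infty |a_{\sigma_i}|^p w_i\big)^{1/p}$ over all permutations $\sigma$ of $\mathbb{N}$; $L_{p,w}$ is the set of real sequences with finite norm. $\|a\|_{p,w,i}=\|(a_1,\dots,a_i,0,0,\dots)\|_{p,w}$. $A$ is equinormed if $\forall\varepsilon>0\ \exists i\ \forall a\in A:\ \|a\|_{p,w}\le\|a\|_{p,w,i}+\varepsilon$. For $a\in L_{p,w}$, $\sigma^a:\mathbb{N}\to\mathbb{N}$ is defined recursively: $\sigma^a_i$ is the element $j$ of $\mathbb{N}\setminus\{\sigma^a_1,\dots,\sigma^a_{i-1}\}$ with $|a_j|$ maximal, taking the smallest such index in case of ties (well defined for $a\in L_{p,w}$; $|a_{\sigma^a_i}|$ is nonincreasing). *)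

(* Defs.v *)
(* Sequences are indexed from 0: a 0 = a_1 in the paper. *)
From HB Require Import structures.
From mathcomp Require Import all_boot all_order all_algebra.
From mathcomp Require Import all_classical all_reals all_analysis.
Set Implicit Arguments. Unset Strict Implicit. Unset Printing Implicit Defensive.
Import Order.TTheory GRing.Theory Num.Theory.
Import numFieldNormedType.Exports.
Local Open Scope classical_set_scope.
Local Open Scope ring_scope.

Section Defs.
Variable R : realType.

Definition weight_seq (w : R^nat) : Prop :=
  w 0%N = 1 /\ (forall i, 0 < w i) /\ (forall i, w i.+1 <= w i) /\
  (w @ \oo --> (0 : R)) /\ ((\sum_(0 <= i <oo) (w i)%:E) = +oo)%E.

Definition perm_sum (p : R) (w a : R^nat) (sigma : nat -> nat) : \bar R :=
  (\sum_(0 <= i <oo) ((`|a (sigma i)| `^ p) * w i)%:E)%E.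

Definition lpw_norm (p : R) (w a : R^nat) : \bar R :=
  ((ereal_sup [set perm_sum p w a sigma | sigma in [set s : nat -> nat | bijective s]])
    `^ (p^-1))%E.

Definition Lpw (p : R) (w : R^nat) : set (R^nat) :=
  [set a | (lpw_norm p w a < +oo)%E].

Definition lpw_norm_trunc (p : R) (w a : R^nat) (i : nat) : \bar R :=
  lpw_norm p w (fun j => if (j < i)%N then a j else 0).

Definition equinormed (p : R) (w : R^nat) (A : set (R^nat)) : Prop :=
  forall eps : R, 0 < eps -> exists i : nat, forall a, A a ->
    (lpw_norm p w a <= lpw_norm_trunc p w a i + eps%:E)%E.

Definition greedy_next_spec (a : R^nat) (used : seq nat) (j : nat) : Prop :=
  j \notin used /\
  (forall k, k \notin used -> `|a k| <= `|a j|) /\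
  (forall k, k \notin used -> `|a k| = `|a j| -> (j <= k)%N).

Definition greedy_next (a : R^nat) (used : seq nat) : nat :=
  xget 0%N (greedy_next_spec a used).

Fixpoint greedy_prefix (a : R^nat) (n : nat) : seq nat :=
  match n with
  | 0 => [::]
  | n.+1 => rcons (greedy_prefix a n) (greedy_next a (greedy_prefix a n))
  end.

(* sigma^a (0-indexed: sigma_of a i = sigma^a_{i+1}) *)
Definition sigma_of (a : R^nat) (i : nat) : nat := greedy_next a (greedy_prefix a i).

End Defs.

(* Main.v *)
Require Import Defs.
From HB Require Import structures.
From mathcomp Require Import all_boot all_order all_algebra.
From mathcomp Require Import all_classical all_reals all_analysis.
Import Order.TTheory GRing.Theory Num.Theory.
Import numFieldNormedType.Exports.
Local Open Scope classical_set_scope.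
Local Open Scope ring_scope.
From mathcomp Require Import ring lra.
Set Implicit Arguments. Unset Strict Implicit.
Lemma ext_bij (L : seq nat) : uniq L ->
  exists s : nat -> nat, bijective s /\ forall i, (i < size L)%N -> s i = nth 0%N L i.
Proof.
move=> uL.
have [m Lm] : exists m, forall x, x \in L -> (x < m)%N.
  by exists (\max_(x <- L) x).+1 => x xL; rewrite ltnS; apply: (leq_bigmax_seq x xL).
pose Q := L ++ [seq x <- iota 0 m | x \notin L].
have uQ : uniq Q.
  rewrite /Q cat_uniq uL filter_uniq ?iota_uniq // andbT /=.
  by apply/hasPn => x; rewrite seq.mem_filter => /andP[].
have memQ : forall x, (x \in Q) = (x < m)%N.
  move=> x; rewrite /Q mem_cat seq.mem_filter mem_iota add0n /=.
  by case xL: (x \in L) => //=; rewrite Lm.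
have sQ : size Q = m.
  have pQ : perm_eq Q (iota 0 m).
    by apply: uniq_perm => //; [exact: iota_uniq | move=> x; rewrite memQ mem_iota].
  by rewrite (perm_size pQ) size_iota.
exists (fun i => if (i < m)%N then nth 0%N Q i else i); split; last first.
  move=> i iL; have im : (i < m)%N.
    by apply: leq_trans iL _; rewrite -sQ size_cat leq_addr.
  by rewrite im /Q nth_cat iL.
exists (fun j => if (j < m)%N then index j Q else j).
  move=> i /=; case: (ltnP i m) => im.
    have iQ : (nth 0%N Q i < m)%N by rewrite -memQ mem_nth // sQ.
    by rewrite iQ index_uniq // sQ.
  by case: (ltnP i m) im => //; rewrite ltnNge => /negP.
move=> j /=; case: (ltnP j m) => jm.
  have jQ : j \in Q by rewrite memQ.
  by rewrite -sQ index_mem jQ nth_index.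
by case: (ltnP j m) jm => //; rewrite ltnNge => /negP.
Qed.

Lemma abel (R : realType) (B : nat) : forall (v e : nat -> R),
  (forall k l, (k <= l)%N -> (l < B)%N -> v l <= v k) ->
  (forall k, (k < B)%N -> 0 <= v k) ->
  (forall m, (m < B)%N -> 0 <= \sum_(0 <= k < m.+1) e k) ->
  0 <= \sum_(0 <= k < B) e k * v k.
Proof.
elim: B => [|B IH] v e vmon vpos epos; first by rewrite big_geq.
have -> : \sum_(0 <= k < B.+1) e k * v k =
   \sum_(0 <= k < B.+1) e k * (v k - v B) + v B * \sum_(0 <= k < B.+1) e k.
  rewrite big_distrr -big_split /=; apply: eq_bigr => k _.
  by rewrite mulrBr [v B * _]mulrC subrK.
apply: addr_ge0; last by apply: mulr_ge0; [exact: vpos | exact: epos].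
rewrite big_nat_recr //= subrr mulr0 addr0.
apply: IH => //.
- by move=> k l kl lB; rewrite lerD2r; apply: vmon => //; exact: ltnW.
- by move=> k kB; rewrite subr_ge0; apply: vmon => //; exact: ltnW.
- by move=> m mB; apply: epos; exact: ltnW.
Qed.
Lemma gprefixE (R : realType) (a : R^nat) n :
  greedy_prefix a n = [seq sigma_of a i | i <- iota 0 n].
Proof.
elim: n => // n IH.
have -> : iota 0 n.+1 = rcons (iota 0 n) n.
  by rewrite -cats1 -addn1 iotaD.
by rewrite map_rcons /= -IH.
Qed.

Definition has_greedy (R : realType) (a : R^nat) :=
  forall U, exists j, greedy_next_spec a U j.

Lemma sig_spec (R : realType) (a : R^nat) n : has_greedy a ->
  greedy_next_spec a (greedy_prefix a n) (sigma_of a n).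
Proof. by move=> H; rewrite /sigma_of /greedy_next; apply: xgetPex; exact: H. Qed.

Lemma sig_neq (R : realType) (a : R^nat) n t : has_greedy a -> (t < n)%N ->
  sigma_of a n != sigma_of a t.
Proof.
move=> H tn; have [+ _] := sig_spec n H; rewrite gprefixE => nin.
apply/eqP => e; move/negP: nin; apply; apply/mapP; exists t => //.
by rewrite mem_iota.
Qed.

Lemma sig_ge (R : realType) (a : R^nat) n k : has_greedy a ->
  k \notin greedy_prefix a n -> `|a k| <= `|a (sigma_of a n)|.
Proof. by move=> H kn; have [_ [+ _]] := sig_spec n H; apply. Qed.

Lemma notin_ge (R : realType) (a : R^nat) n k t : has_greedy a ->
  k \notin greedy_prefix a n -> (t < n)%N -> `|a k| <= `|a (sigma_of a t)|.
Proof.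
move=> H kn tn; apply: sig_ge => //; move: kn; rewrite !gprefixE.
apply: contra => /mapP[u]; rewrite mem_iota => /andP[_ ut] ->.
by apply/mapP; exists u => //; rewrite mem_iota (ltn_trans ut tn).
Qed.

Lemma sig_mono (R : realType) (a : R^nat) m n : has_greedy a -> (m <= n)%N ->
  `|a (sigma_of a n)| <= `|a (sigma_of a m)|.
Proof.
move=> H mn; rewrite leq_eqVlt in mn; case/orP: mn => [/eqP -> //|mn].
apply: sig_ge => //; rewrite gprefixE; apply/mapP => -[t].
rewrite mem_iota => /andP[_ tm] e.
by move/eqP: (sig_neq H (ltn_trans tm mn)); rewrite e.
Qed.

Lemma gprefix_uniq (R : realType) (a : R^nat) n : has_greedy a ->
  uniq (greedy_prefix a n).
Proof.
move=> H; elim: n => //= n IH.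
rewrite rcons_uniq IH andbT; have [+ _] := sig_spec n H; done.
Qed.

Lemma gsize_prefix (R : realType) (a : R^nat) n : size (greedy_prefix a n) = n.
Proof. by rewrite gprefixE size_map size_iota. Qed.

Lemma iter_add0 (R : realType) n (v : R) : iter n (fun y => v + y) 0 = v *+ n.
Proof. by elim: n => //= n ->; rewrite mulrS. Qed.

Lemma top_r (R : realType) (p : R) (a : R^nat) (J : seq nat) : has_greedy a -> 0 <= p ->
  uniq J ->
  \sum_(j <- J) `|a j| `^ p <= \sum_(0 <= t < size J) `|a (sigma_of a t)| `^ p.
Proof.
move=> H p0 uJ.
set r := size J.
have gmono : forall x y : nat, `|a x| <= `|a y| -> `|a x| `^ p <= `|a y| `^ p.
  by move=> x y xy; apply: ge0_ler_powR => //; rewrite nnegrE.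
case r0 : r => [|r'].
  by move/eqP: r0; rewrite size_eq0 => /eqP ->; rewrite !big_nil.
set P := greedy_prefix a r.
have sP : size P = r by rewrite gsize_prefix.
have uP : uniq P by exact: gprefix_uniq.
have -> : \sum_(0 <= t < r'.+1) `|a (sigma_of a t)| `^ p = \sum_(x <- P) `|a x| `^ p.
  by rewrite /P gprefixE big_map /index_iota subn0 r0.
rewrite [X in X <= _](bigID (fun x => x \in P)) [X in _ <= X](bigID (fun x => x \in J)) /=.
have -> : \sum_(i <- J | i \in P) `|a i| `^ p = \sum_(i <- P | i \in J) `|a i| `^ p.
  rewrite -[LHS]big_filter -[RHS]big_filter; apply: perm_big; apply: uniq_perm; rewrite ?filter_uniq //.
  by move=> x; rewrite !seq.mem_filter andbC.
rewrite lerD2l.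
set v := `|a (sigma_of a r')| `^ p.
have cnt : count (fun x => x \notin P) J = count (fun x => x \notin J) P.
  have c1 := count_predC (fun x => x \in P) J.
  have c2 := count_predC (fun x => x \in J) P.
  have e : count (fun x => x \in P) J = count (fun x => x \in J) P.
    rewrite -!size_filter; apply: perm_size; apply: uniq_perm; rewrite ?filter_uniq //.
    by move=> x; rewrite !seq.mem_filter andbC.
  rewrite sP -/r in c2; rewrite -/r in c1.
  by apply/eqP; rewrite -(eqn_add2l (count (fun x => x \in P) J)) c1 e c2.
apply: (@le_trans _ _ (\sum_(i <- J | i \notin P) v)).
  apply: ler_sum => x xP; apply: gmono.
  by apply: (notin_ge (n := r)) => //; rewrite r0.
rewrite big_const_seq iter_add0 cnt -iter_add0 -big_const_seq.
rewrite [X in X <= _]big_seq_cond [X in _ <= X]big_seq_cond.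
apply: ler_sum => x /andP[+ _].
rewrite /P gprefixE => /mapP[t]; rewrite mem_iota => /andP[_ tr] ->.
apply: gmono; apply: sig_mono => //; rewrite -ltnS -r0 //.
Qed.
Definition Ssup (R : realType) (p : R) (w a : R^nat) :=
  ereal_sup [set perm_sum p w a sigma | sigma in [set s : nat -> nat | bijective s]].

Lemma sup_ge_list (R : realType) (p : R) (w a : R^nat) (L : seq nat) :
  (forall i, 0 <= w i) -> uniq L ->
  ((\sum_(0 <= i < size L) (`|a (nth 0%N L i)| `^ p * w i)%:E) <= Ssup p w a)%E.
Proof.
move=> w0 uL; have [s [bs sL]] := ext_bij uL.
apply: (@le_trans _ _ (perm_sum p w a s)); last first.
  by apply: ereal_sup_ubound; exists s.
apply: (@le_trans _ _ (\sum_(0 <= i < size L) (`|a (s i)| `^ p * w i)%:E)).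
  by rewrite le_eqVlt; apply/orP; left; apply/eqP; apply: eq_big_nat => i /andP[_ iL]; rewrite sL.
apply: nneseries_lim_ge => n _ _; rewrite lee_fin; apply: mulr_ge0 => //; exact: powR_ge0.
Qed.

Lemma Ssup_ge0 (R : realType) (p : R) (w a : R^nat) : (forall i, 0 <= w i) ->
  (0 <= Ssup p w a)%E.
Proof.
move=> w0; have := @sup_ge_list R p w a [::] w0 isT.
by rewrite /= big_geq.
Qed.

Lemma unbounded_w (R : realType) (w : R^nat) : (forall i, 0 <= w i) ->
  (\sum_(0 <= i <oo) (w i)%:E = +oo)%E -> forall M, exists n, M < \sum_(0 <= i < n) w i.
Proof.
move=> w0 winf M; apply: contrapT => nH.
have : (\sum_(0 <= i <oo) (w i)%:E <= M%:E)%E.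
  apply: lime_le; first by apply: is_cvg_nneseries => n _ _; rewrite lee_fin.
  apply: nearW => n; rewrite sumEFin lee_fin leNgt; apply/negP => Mn; apply: nH.
  by exists n.
by rewrite winf leNgt ltry.
Qed.

Lemma lpw_normE (R : realType) (p : R) (w a : R^nat) :
  lpw_norm p w a = ((Ssup p w a) `^ p^-1)%E.
Proof. by []. Qed.

Lemma Ssup_fin (R : realType) (p : R) (w a : R^nat) : 0 < p -> (forall i, 0 <= w i) ->
  (lpw_norm p w a < +oo)%E -> exists s, 0 <= s /\ Ssup p w a = s%:E.
Proof.
move=> p0 w0; rewrite lpw_normE => lt.
have := Ssup_ge0 p a w0.
move: lt; case: (Ssup p w a) => [s| |] //=.
- by move=> _ s0; exists s.
- by rewrite gt_eqF ?invr_gt0 // ltxx.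
Qed.

Lemma big_entries (R : realType) (p : R) (w a : R^nat) : 0 < p -> (forall i, 0 <= w i) ->
  (\sum_(0 <= i <oo) (w i)%:E = +oo)%E ->
  (lpw_norm p w a < +oo)%E -> forall c, 0 < c -> exists B, forall k, (B <= k)%N -> `|a k| < c.
Proof.
move=> p0 w0 winf afin c c0; apply: contrapT => nH.
have H' : forall B, exists k, (B <= k)%N /\ c <= `|a k|.
  move=> B; apply: contrapT => nk; apply: nH; exists B => k kB.
  rewrite ltNge; apply/negP => ck; apply: nk; by exists k.
have HL : forall n, exists L, [/\ uniq L, size L = n & forall x, x \in L -> c <= `|a x|].
  elim=> [|n [L [uL sL cL]]]; first by exists [::].
  have [k [kB ck]] := H' (\max_(x <- L) x).+1.
  exists (k :: L); split => /=; [|by rewrite sL|].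
  - rewrite uL andbT; apply/negP => kL.
    have := @leq_bigmax_seq _ L xpredT (fun x : nat => x) k kL isT.
    by rewrite leqNgt kB.
  - by move=> x; rewrite in_cons => /orP[/eqP -> //|]; exact: cL.
have Hn : forall n, ((c `^ p * \sum_(0 <= i < n) w i)%:E <= Ssup p w a)%E.
  move=> n; have [L [uL sL cL]] := HL n.
  apply: le_trans (sup_ge_list p a w0 uL).
  rewrite sumEFin lee_fin sL big_distrr /=; apply: ler_sum_nat => i /andP[_ iL].
  rewrite ler_wpM2r //; apply: ge0_ler_powR; rewrite ?nnegrE ?(ltW p0) ?(ltW c0) //.
  by apply: cL; apply: mem_nth; rewrite ?sL.
have [s [s0 sE]] := Ssup_fin p0 w0 afin.
have cp0 : 0 < c `^ p by apply: powR_gt0.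
have [n Hs] := unbounded_w w0 winf ((s + 1) / c `^ p).
have := Hn n; rewrite sE lee_fin.
rewrite ltr_pdivrMr // in Hs.
rewrite mulrC => Hle.
have s1 : s < s + 1 by rewrite ltrDl ltr01.
by have := lt_le_trans (lt_trans s1 Hs) Hle; rewrite ltxx.
Qed.


Lemma fin_argmax (R : realType) (f : nat -> R) (P : pred nat) B :
  (exists k, (k < B)%N /\ P k) ->
  exists j, [/\ (j < B)%N, P j & forall k, (k < B)%N -> P k -> f k <= f j].
Proof.
elim: B => [[k [//]]|B IH] ex.
have [ex'|nex] := pselect (exists k, (k < B)%N /\ P k).
  have [j [jB Pj jmax]] := IH ex'.
  case PB: (P B); last first.
    exists j; split => //; first exact: ltnW.
    move=> k; rewrite ltnS leq_eqVlt => /orP[/eqP -> |kB]; first by rewrite PB.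
    exact: jmax.
  have [fj|fj] := leP (f B) (f j).
    exists j; split => //; first exact: ltnW.
    move=> k; rewrite ltnS leq_eqVlt => /orP[/eqP -> //|kB]; exact: jmax.
  exists B; split => //.
  move=> k; rewrite ltnS leq_eqVlt => /orP[/eqP -> //|kB] Pk.
  exact: le_trans (jmax k kB Pk) (ltW fj).
have PB : P B.
  case: ex => k [kB Pk]; move: kB; rewrite ltnS leq_eqVlt => /orP[/eqP <- //|kB].
  by exfalso; apply: nex; exists k.
exists B; split => //.
move=> k; rewrite ltnS leq_eqVlt => /orP[/eqP -> //|kB] Pk.
by exfalso; apply: nex; exists k.
Qed.

Lemma fresh_notin (U : seq nat) : (\max_(x <- U) x).+1 \notin U.
Proof.
apply/negP => kL.
have := @leq_bigmax_seq _ U xpredT (fun x : nat => x) _ kL isT.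
by rewrite ltnn.
Qed.

Lemma greedy_exists (R : realType) (p : R) (w a : R^nat) : 0 < p -> (forall i, 0 <= w i) ->
  (\sum_(0 <= i <oo) (w i)%:E = +oo)%E ->
  (lpw_norm p w a < +oo)%E -> has_greedy a.
Proof.
move=> p0 w0 winf afin U.
have [[k [kU ak]]|nex] := pselect (exists k, k \notin U /\ a k != 0).
  have c0 : 0 < `|a k| by rewrite normr_gt0.
  have [B HB] := big_entries p0 w0 winf afin c0.
  have kB : (k < B)%N.
    by rewrite ltnNge; apply/negP => Bk; have := HB _ Bk; rewrite ltxx.
  have [j [jB jU jmax]] := @fin_argmax R (fun x => `|a x|) (fun x => x \notin U) B
    (ex_intro _ k (conj kB kU)).
  have exP : exists m, [&& (m < B)%N, m \notin U & `|a m| == `|a j|].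
    by exists j; rewrite jB jU eqxx.
  have [m /and3P[mB mU /eqP mj] mmin] := ex_minnP exP.
  have ckj : `|a k| <= `|a j| := jmax k kB kU.
  exists m; split => //; split.
    move=> k' k'U; rewrite mj; have [k'B|k'B] := ltnP k' B; first exact: jmax.
    exact: ltW (lt_le_trans (HB _ k'B) ckj).
  move=> k' k'U e; apply: mmin.
  have k'B : (k' < B)%N.
    rewrite ltnNge; apply/negP => Bk; have := HB _ Bk; rewrite e mj => lt.
    by have := lt_le_trans lt ckj; rewrite ltxx.
  by rewrite k'B k'U e mj eqxx.
have a0 : forall k, k \notin U -> a k = 0.
  move=> k kU; apply/eqP; apply: contrapT => ak; apply: nex; exists k; split => //.
  exact/negP.
have exP : exists m, m \notin U by exists (\max_(x <- U) x).+1; exact: fresh_notin.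
have [m mU mmin] := ex_minnP exP.
exists m; split => //; split.
  by move=> k kU; rewrite a0 // a0 // normr0.
by move=> k kU _; exact: mmin.
Qed.
Lemma w_mono (R : realType) (w : R^nat) : (forall k, w k.+1 <= w k) ->
  forall k l, (k <= l)%N -> w l <= w k.
Proof.
move=> wm k l /subnKC <-; elim: (l - k)%N => [|n IH]; first by rewrite addn0.
by rewrite addnS; exact: le_trans (wm _) IH.
Qed.

Lemma trunc_le (R : realType) (p : R) (w a : R^nat) i : has_greedy a -> 0 < p ->
  (forall k, 0 <= w k) -> (forall k, w k.+1 <= w k) ->
  (Ssup p w (fun j => if (j < i)%N then a j else 0%R) <=
    (\sum_(0 <= t < i) `|a (sigma_of a t)| `^ p * w t)%:E)%E.
Proof.
move=> H p0 w0 wm.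
set b := (fun j => if (j < i)%N then a j else 0%R).
apply: ge_ereal_sup => x [tau [tau' c1 c2] <-].
set g := fun j => `|a j| `^ p.
set c := fun k => `|b (tau k)| `^ p.
set d := fun k => if (k < i)%N then g (sigma_of a k) else 0.
have cE : forall k, c k = if (tau k < i)%N then g (tau k) else 0.
  move=> k; rewrite /c /b /g; case: ifP => // _; by rewrite normr0 powR0 // gt_eqF.
set B := maxn i (\max_(j <- iota 0 i) tau' j).+1.
have iB : (i <= B)%N by rewrite leq_maxl.
have Hzero : forall k, (B <= k)%N -> c k = 0.
  move=> k Bk; rewrite cE; case: ifP => // ti; exfalso.
  have : (tau' (tau k) <= \max_(j <- iota 0 i) tau' j)%N.
    by apply: (@leq_bigmax_seq _ (iota 0 i) xpredT tau' (tau k)) => //; rewrite mem_iota.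
  rewrite c1 => kle; move: Bk; rewrite geq_max => /andP[_]; rewrite ltnNge kle //.
have -> : perm_sum p w b tau = (\sum_(0 <= k < B) c k * w k)%:E.
  rewrite /perm_sum (@nneseries_split _ _ 0 B); last first.
    by move=> k _; rewrite lee_fin; apply: mulr_ge0 => //; exact: powR_ge0.
  rewrite add0n eseries0 ?adde0 ?sumEFin //.
  by move=> k Bk _; rewrite -/(c k) Hzero // mul0r.
rewrite lee_fin.
have -> : \sum_(0 <= t < i) `|a (sigma_of a t)| `^ p * w t = \sum_(0 <= k < B) d k * w k.
  rewrite (@big_cat_nat _ _ _ i 0 B) //= [X in _ = _ + X]big1_seq ?addr0.
  by apply: eq_big_nat => k /andP[_ ki]; rewrite /d ki.
  by move=> k; rewrite mem_index_iota => /andP[_ /andP[ik _]]; rewrite /d ifN ?mul0r // -leqNgt.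
rewrite -subr_ge0 -sumrB.
have -> : \sum_(0 <= k < B) (d k * w k - c k * w k) = \sum_(0 <= k < B) (d k - c k) * w k.
  by apply: eq_bigr => k _; rewrite mulrBl.
apply: abel.
- by move=> k l kl _; exact: w_mono.
- by move=> k _.
move=> m mB; rewrite sumrB subr_ge0.
have -> : \sum_(0 <= k < m.+1) c k = \sum_(j <- [seq j <- map tau (iota 0 m.+1) | (j < i)%N]) g j.
  rewrite big_filter big_map [in RHS]big_mkcond /index_iota subn0; apply: eq_bigr => k _; by rewrite cE.
set J := [seq j <- _ | _].
have uJ : uniq J.
  rewrite filter_uniq // map_inj_uniq ?iota_uniq //; exact: can_inj c1.
apply: le_trans (@top_r R p a J H (ltW p0) uJ) _.
have sJm : (size J <= m.+1)%N.
  by rewrite size_filter (leq_trans (count_size _ _)) // size_map size_iota.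
have sJi : (size J <= i)%N.
  have -> : i = size (iota 0 i) by rewrite size_iota.
  apply: uniq_leq_size => // z0; rewrite seq.mem_filter mem_iota => /andP[xi _].
  by rewrite add0n xi.
rewrite (@big_cat_nat _ _ _ (size J) 0 m.+1) //= -[X in X <= _]addr0 lerD //.
  apply: ler_sum_nat => t /andP[_ tJ]; by rewrite /d (leq_trans tJ sJi).
apply: sumr_ge0 => t _; rewrite /d; case: ifP => // _; exact: powR_ge0.
Qed.
Lemma pow_close (R : realType) (p x y K e : R) : 1 <= p -> 0 <= e -> 0 <= y -> 0 <= x -> x <= K ->
  x <= y + e -> x `^ p <= y `^ p + e * (K + 1) `^ p.
Proof.
move=> p1 e0 y0 x0 xK xye.
have p0 : 0 <= p by exact: le_trans ler01 p1.
have [yx|xy] := leP x y.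
  apply: le_trans (ge0_ler_powR p0 _ _ yx) _; rewrite ?nnegrE //.
  by rewrite lerDl mulr_ge0 ?powR_ge0.
set L := K + 1.
have Ly : 1 <= L - y by rewrite /L lerBrDr addrC lerD2r (le_trans (ltW xy) xK).
have Ly0 : 0 < L - y by exact: lt_le_trans ltr01 Ly.
set l := (x - y) / (L - y).
have l0 : 0 <= l by apply: divr_ge0; [rewrite subr_ge0 ltW | exact: ltW].
have l1 : l <= 1.
  by rewrite ler_pdivrMr // mul1r lerD2r /L (le_trans xK) // lerDl.
have le : l <= e.
  rewrite ler_pdivrMr //; apply: (@le_trans _ _ e).
    by rewrite lerBlDr addrC.
  by rewrite ler_peMr.
have xE : x = l * L + (1 - l) * y.
  rewrite /l; field; exact: lt0r_neq0.
have := @convex_powR R p p1 (Itv01 l0 l1) L y.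
rewrite !inE /= !in_itv /= !andbT => /(_ _ y0).
have L0 : 0 <= L by rewrite /L addr_ge0 // (le_trans x0 xK).
move=> /(_ L0); move=> h; apply: le_trans (le_trans _ h) _.
  by rewrite {1}xE.
rewrite convRE /=.
have Lp : 0 <= L `^ p by exact: powR_ge0.
have yp : 0 <= y `^ p by exact: powR_ge0.
rewrite addrC lerD //; last by rewrite ler_wpM2r.
by rewrite ler_piMl // unstable.onem_le1.
Qed.
Lemma sigma_partial_le (R : realType) (p : R) (w a : R^nat) n : has_greedy a ->
  (forall i, 0 <= w i) ->
  ((\sum_(0 <= t < n) `|a (sigma_of a t)| `^ p * w t)%:E <= Ssup p w a)%E.
Proof.
move=> H w0.
have := @sup_ge_list R p w a (greedy_prefix a n) w0 (gprefix_uniq n H).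
rewrite gsize_prefix sumEFin; apply: le_trans; rewrite lee_fin le_eqVlt; apply/orP; left.
apply/eqP; apply: eq_big_nat => t /andP[_ tn].
by rewrite gprefixE (nth_map 0%N) ?size_iota // nth_iota.
Qed.
Unset Implicit Arguments. Set Strict Implicit.

Theorem mainTheorem12 (R : realType) (p : R) (w : R^nat) (A : set (R^nat)) :
  1 <= p -> weight_seq w -> A `<=` Lpw p w ->
  (exists M : R, forall a, A a -> (lpw_norm p w a <= M%:E)%E) ->
  equinormed p w A ->
  forall eps : R, 0 < eps -> exists N : nat, forall a, A a -> forall i : nat, (N <= i)%N ->
    (\sum_(i <= j <oo) ((`|a (sigma_of a j)| `^ p) * w j)%:E < eps%:E)%E.
Proof.
move=> p1 [_ [wpos [wm [_ winf]]]] AL [M HM] equi eps eps0.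
have p0 : 0 < p by exact: lt_le_trans ltr01 p1.
have w0 : forall i, 0 <= w i by move=> i; exact: ltW.
set K := Num.max M 0.
have K0 : 0 <= K by rewrite /K le_max lexx orbT.
have MK : M <= K by rewrite /K le_max lexx.
have Kp : 0 < (K + 1) `^ p by apply: powR_gt0; rewrite ltr_wpDl.
set d := eps / (2 * (K + 1) `^ p).
have d0 : 0 < d by rewrite divr_gt0 // mulr_gt0.
have dK : d * (K + 1) `^ p = eps / 2.
  rewrite /d; field; rewrite gt_eqF //.
have [N HN] := equi d d0.
exists N => a Aa i Ni.
have afin := AL a Aa.
have H := greedy_exists p0 w0 winf afin.
have [s [s0 sE]] := Ssup_fin p0 w0 afin.
set G := fun n => \sum_(0 <= t < n) `|a (sigma_of a t)| `^ p * w t.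
have tle := @trunc_le R p w a N H p0 w0 wm.
set T := Ssup _ _ _ in tle.
have T0 : (0 <= T)%E by exact: Ssup_ge0.
have [t [t0 tE]] : exists t, 0 <= t /\ T = t%:E.
  move: T0 tle; case: T => [t'| |] //= t'0 _; by exists t'.
have tG : t <= G N by move: tle; rewrite tE lee_fin.
have hN := HN a Aa.
rewrite /lpw_norm_trunc !lpw_normE -/T sE tE !poweR_EFin -EFinD lee_fin in hN.
have hM := HM a Aa; rewrite lpw_normE sE poweR_EFin lee_fin in hM.
have := @pow_close R p _ _ K d p1 (ltW d0) (powR_ge0 _ _) (powR_ge0 _ _) (le_trans hM MK) hN.
rewrite -!powRrM mulVf ?gt_eqF // !powRr1 // dK => sle.
set f := fun j => ((`|a (sigma_of a j)| `^ p) * w j)%:E.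
have f0 : forall j, (0 <= f j)%E by move=> j; rewrite lee_fin mulr_ge0 // powR_ge0.
have Full : (\sum_(0 <= j <oo) f j <= s%:E)%E.
  rewrite -sE; apply: lime_le; first by apply: is_cvg_nneseries => n _ _; exact: f0.
  apply: nearW => n; rewrite /f sumEFin; exact: sigma_partial_le.
rewrite (@nneseries_split _ _ 0 N) // add0n /f sumEFin -/(G N) in Full.
have tailN : (\sum_(N <= j <oo) f j <= (eps / 2)%:E)%E.
  rewrite -(@leeD2lE _ (G N)%:E) // -EFinD (le_trans Full) // lee_fin.
  by apply: le_trans sle _; rewrite lerD2r.
have tailI : (\sum_(i <= j <oo) f j <= \sum_(N <= j <oo) f j)%E.
  rewrite (@nneseries_split _ _ N (i - N)) // subnKC //.
  rewrite leeDr //; apply: sume_ge0 => k _; exact: f0.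
apply: le_lt_trans tailI (le_lt_trans tailN _); rewrite lte_fin; lra.
Qed.
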